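(* Let $r\ge2$ and let $\mathcal{P}$ be a set of $m\ge2$ non-collectable $r$-patterns. Then every $\mathcal P$-clique has size smaller than the multicolor Ramsey number $R_m(3)$. In particular, if $m=2$, every $\mathcal P$-clique has at most $5$ edges.
   Context: An ordered $r$-matching is a set of pairwise disjoint $r$-element subsets (edges) of a linearly ordered vertex set covering it. An $r$-pattern is an ordered $r$-matching of size 2, written as a word over $\{A,B\}$ (each letter $r$ times, starting with $A$). Two edges form pattern $P$ if they induce a matching order-isomorphic to $P$; a $\mathcal P$-clique is an ordered matching all of whose pairs of edges form patterns in $\mathcal P$. An $r$-pattern is collectable if it can be split into consecutive blocks each of the form $A^tB^t$ or $B^tA^t$ ($t\ge1$); otherwise it is non-collectable. $R_m(3)$ is the least $N$ such that every coloring of the edges of the complete graph $K_N$ with $m$ colors contains a monochromatic triangle. *)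

(* Defs.v *)
From mathcomp Require Import all_boot.
Set Implicit Arguments. Unset Strict Implicit. Unset Printing Implicit Defensive.

(* Words over {A,B}: A is encoded by [true], B by [false]. *)

Definition is_pattern (r : nat) (w : seq bool) : Prop :=
  count id w = r /\ count negb w = r /\ head false w = true.

Definition block (t : nat) (b : bool) : seq bool := nseq t b ++ nseq t (~~ b).

Definition collectable (w : seq bool) : Prop :=
  exists bs : seq (nat * bool),
    all (fun tb => 0 < tb.1) bs /\ w = flatten [seq block tb.1 tb.2 | tb <- bs].

(* Vertex set 'I_N, ordered by the natural order. *)
Definition ordered_matching (r N : nat) (M : {set {set 'I_N}}) : Prop :=
  (forall e, e \in M -> #|e| = r) /\
  (forall e f, e \in M -> f \in M -> e != f -> [disjoint e & f]) /\
  (\bigcup_(e in M) e = [set: 'I_N]).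

(* The pattern (word) formed by two edges e, f: list the vertices of e ∪ f in
   increasing order, writing A for vertices of the edge containing the
   smallest vertex and B for the others. *)
Definition pattern_of (N : nat) (e f : {set 'I_N}) : seq bool :=
  match sort (fun x y : 'I_N => (x <= y)%N) (enum (e :|: f)) with
  | [::] => [::]
  | a :: s' => [seq (x \in e) == (a \in e) | x <- a :: s']
  end.

Definition P_clique (N : nat) (P : seq (seq bool)) (M : {set {set 'I_N}}) : Prop :=
  forall e f, e \in M -> f \in M -> e != f -> pattern_of e f \in P.

(* Every m-colouring of the edges of K_N (colour of {i,j}, i<j, is c i j)
   contains a monochromatic triangle. *)
Definition mono_triangle_prop (m N : nat) : Prop :=
  forall c : 'I_N -> 'I_N -> 'I_m,
    exists i j k : 'I_N, [/\ (i < j)%N, (j < k)%N, c i j = c j k & c i j = c i k].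

Definition is_Ramsey3 (m R : nat) : Prop :=
  mono_triangle_prop m R /\ forall N, mono_triangle_prop m N -> R <= N.

(* Main.v *)
Require Import Defs.
From mathcomp Require Import all_boot zify.
Set Implicit Arguments. Unset Strict Implicit. Unset Printing Implicit Defensive.

Section Srt.
Variable N : nat.
Implicit Types (S X Y Z E F : {set 'I_N}).

Definition srt S := sort (fun x y : 'I_N => (x <= y)%N) (enum S).
Definition ltO := fun x y : 'I_N => (x < y)%N.

Lemma ltO_trans : transitive ltO.
Proof. move=> y x z; rewrite /ltO; apply: ltn_trans. Qed.

Lemma srt_sorted S : sorted ltO (srt S).
Proof.
have -> : ltO = relpre (@nat_of_ord N) ltn by [].
rewrite -sorted_map ltn_sorted_uniq_leq (map_inj_uniq val_inj) sort_uniq enum_uniq /=.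
rewrite sorted_map; apply: sort_sorted => x y; exact: leq_total.
Qed.

Lemma mem_srt S x : (x \in srt S) = (x \in S).
Proof. by rewrite mem_sort mem_enum. Qed.

Lemma srt_eq s S : sorted ltO s -> s =i S -> s = srt S.
Proof.
move=> Hs Hi; apply: (irr_sorted_eq ltO_trans) => //.
- by move=> x; rewrite /ltO ltnn.
- exact: srt_sorted.
- by move=> x; rewrite Hi mem_srt.
Qed.

Lemma filter_srtU X Y : [disjoint X & Y] ->
  [seq x <- srt (X :|: Y) | x \in X] = srt X /\
  [seq x <- srt (X :|: Y) | x \notin X] = srt Y.
Proof.
move=> HD; split; apply: srt_eq; try (apply: sorted_filter; [exact: ltO_trans|exact: srt_sorted]).
- by move=> x; rewrite mem_filter mem_srt in_setU; case: (x \in X).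
- move=> x; rewrite mem_filter mem_srt in_setU.
  case HX: (x \in X) => //=; case HY: (x \in Y) => //.
  by rewrite (disjointFr HD HX) in HY.
Qed.

Definition before E F := exists2 a, a \in E & forall x, x \in E :|: F -> (a <= x)%N.

Lemma pat_first E F : before E F ->
  pattern_of E F = [seq x \in E | x <- srt (E :|: F)].
Proof.
move=> [a Ha Hmin]; rewrite /pattern_of -/(srt (E :|: F)).
have Hs := srt_sorted (E :|: F).
have Hain : a \in srt (E :|: F) by rewrite mem_srt in_setU Ha.
case E1: (srt (E :|: F)) Hs Hain => [|a0 s'] // Hs Hain.
have Ha0 : a0 = a.
  apply: val_inj; apply/eqP; rewrite eqn_leq Hmin; last first.
    by rewrite -mem_srt E1 mem_head.
  move: Hain; rewrite in_cons andbT => /orP [/eqP -> //|Hin].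
  move: Hs; rewrite (sorted_pairwise ltO_trans) /= => /andP [/allP Hall _].
  by apply: ltnW; apply: Hall.
rewrite /= Ha0 Ha; congr (_ :: _); by apply: eq_map => x; rewrite eqb_id.
Qed.

Lemma pat_sym E F : [disjoint E & F] -> pattern_of E F = pattern_of F E.
Proof.
move=> HD; rewrite /pattern_of setUC.
case E1: (sort _ _) => [|a s] //.
have Hin : forall x, x \in a :: s -> (x \in E) = ~~ (x \in F).
  move=> x; rewrite -E1 mem_sort mem_enum in_setU.
  case HE: (x \in E); case HF: (x \in F) => //=.
  by rewrite (disjointFr HD HE) in HF.
have Ha := Hin a (mem_head _ _).
rewrite /=; congr (_ :: _); first by rewrite !eqxx.
apply/eq_in_map => x Hx; rewrite (Hin x) ?in_cons ?Hx ?orbT // Ha.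
by case: (x \in F); case: (a \in F).
Qed.

Lemma before_total E F : [disjoint E & F] -> (exists a, a \in E :|: F) -> before E F \/ before F E.
Proof.
move=> HD [a0 Ha0].
have Hin : a0 \in srt (E :|: F) by rewrite mem_srt.
case E1: (srt (E :|: F)) Hin => [|a s] // _.
have Hs := srt_sorted (E :|: F); rewrite E1 (sorted_pairwise ltO_trans) /= in Hs.
move: Hs => /andP [/allP Hall _].
have Hmin : forall x, x \in E :|: F -> (a <= x)%N.
  move=> x; rewrite -mem_srt E1 in_cons => /orP [/eqP -> //|Hx].
  by apply: ltnW; apply: Hall.
have : a \in E :|: F by rewrite -mem_srt E1 mem_head.
rewrite in_setU => /orP [Ha|Ha]; [left|right]; exists a => //.
by move=> x Hx; apply: Hmin; rewrite setUC.
Qed.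

Lemma before_trans X Y Z : before X Y -> before Y Z -> before X Z.
Proof.
move=> [a Ha Ha'] [b Hb Hb']; exists a => // x; rewrite in_setU => /orP [Hx|Hx].
  by apply: Ha'; rewrite in_setU Hx.
apply: leq_trans (Hb' x _); last by rewrite in_setU Hx orbT.
by apply: Ha'; rewrite in_setU Hb orbT.
Qed.

Lemma before_anti E F : [disjoint E & F] -> before E F -> before F E -> False.
Proof.
move=> HD [a Ha Ha'] [b Hb Hb'].
have Hab : a = b.
  apply: val_inj; apply/eqP; rewrite eqn_leq Ha' ?Hb' // in_setU ?Ha ?Hb ?orbT //.
by move: (disjointFr HD Ha); rewrite Hab Hb.
Qed.


Lemma G1 (P : pred 'I_N) (s : seq 'I_N) w1 w2 x0 :
  sorted ltO s -> map P s = w1 ++ [:: false, true & w2] ->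
  [/\ (nth x0 (filter (predC P) s) (count negb w1) < nth x0 (filter P s) (count id w1))%N,
      forall q, q < count id w1 ->
        (nth x0 (filter P s) q < nth x0 (filter (predC P) s) (count negb w1))%N &
      forall q, count negb w1 < q -> q < size (filter (predC P) s) ->
        (nth x0 (filter P s) (count id w1) < nth x0 (filter (predC P) s) q)%N].
Proof.
move=> Hs Hm.
have Hm1 : map P (take (size w1) s) = w1 by rewrite map_take Hm take_size_cat.
have Hm3 : map P (drop (size w1) s) = [:: false, true & w2] by rewrite map_drop Hm drop_size_cat.
have Es := cat_take_drop (size w1) s.
move: Hm3 Es; set s1 := take _ s.
case: (drop _ s) => [|v [|v' s2]] //= [Pv Pv' Hm2] Es.
rewrite -Es in Hs *.
have Hi : size (filter P s1) = count id w1.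
  by rewrite size_filter -Hm1 count_map; apply: eq_count.
have Hj : size (filter (predC P) s1) = count negb w1.
  by rewrite size_filter -Hm1 count_map; apply: eq_count.
move: Hs; rewrite (sorted_pairwise ltO_trans) pairwise_cat !pairwise_cons allrel_consr.
move=> /and3P [/andP [Hal _] _ /andP [/andP [Hvv' _] /andP [Hv' _]]].
rewrite !filter_cat /= Pv Pv' /=.
split.
- by rewrite !nth_cat Hi Hj !ltnn !subnn.
- move=> q Hq; rewrite !nth_cat Hi Hj Hq ltnn subnn /=.
  have Hin : nth x0 (filter P s1) q \in s1.
    by have := mem_nth x0 (_ : q < size (filter P s1)); rewrite mem_filter => /(_ ltac:(by rewrite Hi)) /andP [].
  exact: (allP Hal _ Hin).
- move=> q Hq1 Hq2; rewrite !nth_cat Hi Hj ltnn subnn /=.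
  rewrite (_ : (q < count negb w1) = false); last by apply/negbTE; rewrite -leqNgt ltnW.
  move: Hq2; rewrite size_cat Hj /=.
  case E: (q - count negb w1) => [|q']; first by move: Hq1; rewrite -subn_gt0 E.
  move=> Hq2 /=.
  have Hq' : q' < size (filter (predC P) s2) by move: Hq2 E; clear; lia.
  have : nth x0 (filter (predC P) s2) q' \in s2.
    by have := mem_nth x0 Hq'; rewrite mem_filter => /andP [].
  exact: (allP Hv').
Qed.

Lemma G2 (P : pred 'I_N) (s : seq 'I_N) w1 w2 x0 :
  sorted ltO s -> map P s = w1 ++ [:: true, false & w2] ->
  [/\ (nth x0 (filter P s) (count id w1) < nth x0 (filter (predC P) s) (count negb w1))%N,
      forall q, q < count negb w1 ->
        (nth x0 (filter (predC P) s) q < nth x0 (filter P s) (count id w1))%N &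
      forall q, count id w1 < q -> q < size (filter P s) ->
        (nth x0 (filter (predC P) s) (count negb w1) < nth x0 (filter P s) q)%N].
Proof.
move=> Hs Hm.
have Hm' : map (predC P) s = map negb w1 ++ [:: false, true & map negb w2].
  by rewrite (eq_map (_ : predC P =1 negb \o P)) // map_comp Hm map_cat.
have [] := G1 x0 Hs Hm'.
have E1 : count id (map negb w1) = count negb w1 by rewrite count_map.
have E2 : count negb (map negb w1) = count id w1 by rewrite count_map; apply: eq_count => b; rewrite /= negbK.
have E3 : filter (predC (predC P)) s = filter P s by apply: eq_filter => x /=; rewrite negbK.
rewrite E1 E2 E3 => H1 H2 H3; split => //.
Qed.

Definition nobad (w : seq bool) : Prop :=
  forall b w1 w2, w = w1 ++ [:: ~~ b, b & w2] ->
    count (pred1 b) w1 < count (pred1 (~~ b)) w1 + 2.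

Lemma filter_srtU' X Y : [disjoint X & Y] ->
  filter (fun x => x \in X) (srt (X :|: Y)) = srt X /\
  filter (predC (fun x => x \in X)) (srt (X :|: Y)) = srt Y.
Proof.
move=> HD; have [H1 H2] := filter_srtU HD; split => //; rewrite -H2; apply: eq_filter.
Qed.

Lemma core X Y Z w : [disjoint X & Y] -> [disjoint X & Z] -> [disjoint Y & Z] ->
  before X Y -> before X Z -> before Y Z ->
  pattern_of X Y = w -> pattern_of X Z = w -> pattern_of Y Z = w ->
  count id w = count negb w -> nobad w.
Proof.
move=> DXY DXZ DYZ BXY BXZ BYZ PXY PXZ PYZ Hbal b w1 w2 Ew.
rewrite pat_first // in PXY; rewrite pat_first // in PXZ; rewrite pat_first // in PYZ.
have [x0 _ _] := BXY.
have [FX1 FY1] := filter_srtU' DXY.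
have [FX2 FZ2] := filter_srtU' DXZ.
have [FY3 FZ3] := filter_srtU' DYZ.
have HsY1 : size (srt Y) = count negb w.
  by rewrite -FY1 size_filter -PXY count_map; apply: eq_count.
have HsY2 : size (srt Y) = count id w.
  by rewrite -FY3 size_filter -PYZ count_map; apply: eq_count.
have Ct : count (pred1 true) w1 = count id w1 by apply: eq_count => [[]].
have Cf : count (pred1 false) w1 = count negb w1 by apply: eq_count => [[]].
case: b Ew => /= Ew; rewrite ?Ct ?Cf ltnNge; apply/negP => Hbad.
- rewrite Ew in PXY PXZ PYZ.
  have [_ _ A3] := G1 x0 (srt_sorted _) PXY; rewrite FX1 FY1 in A3.
  have [_ A2 _] := G1 x0 (srt_sorted _) PYZ; rewrite FY3 FZ3 in A2.
  have [A1 _ _] := G1 x0 (srt_sorted _) PXZ; rewrite FX2 FZ2 in A1.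
  have Hi : count id w1 < count id w by rewrite Ew count_cat /=; lia.
  have := A3 (count negb w1).+1 (leqnn _) ltac:(rewrite HsY2; lia).
  have := A2 (count negb w1).+1 ltac:(lia).
  move: A1; lia.
- rewrite Ew in PXY PXZ PYZ.
  have [_ A2 _] := G2 x0 (srt_sorted _) PXY; rewrite FX1 FY1 in A2.
  have [_ _ A3] := G2 x0 (srt_sorted _) PYZ; rewrite FY3 FZ3 in A3.
  have [A1 _ _] := G2 x0 (srt_sorted _) PXZ; rewrite FX2 FZ2 in A1.
  have Hj : count negb w1 < count negb w by rewrite Ew count_cat /=; lia.
  have := A3 (count id w1).+1 (leqnn _) ltac:(rewrite HsY2; lia).
  have := A2 (count id w1).+1 ltac:(lia).
  move: A1; lia.
Qed.

Lemma core_sym X Y Z w : [disjoint X & Y] -> [disjoint X & Z] -> [disjoint Y & Z] ->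
  (exists a, a \in X) -> (exists a, a \in Y) ->
  pattern_of X Y = w -> pattern_of X Z = w -> pattern_of Y Z = w ->
  count id w = count negb w -> nobad w.
Proof.
move=> DXY DXZ DYZ [a Ha] [b Hb] PXY PXZ PYZ Hbal.
have DYX : [disjoint Y & X] by rewrite disjoint_sym.
have DZX : [disjoint Z & X] by rewrite disjoint_sym.
have DZY : [disjoint Z & Y] by rewrite disjoint_sym.
have PYX : pattern_of Y X = w by rewrite -pat_sym.
have PZX : pattern_of Z X = w by rewrite -pat_sym.
have PZY : pattern_of Z Y = w by rewrite -pat_sym.
have nXY : exists a, a \in X :|: Y by exists a; rewrite in_setU Ha.
have nXZ : exists a, a \in X :|: Z by exists a; rewrite in_setU Ha.
have nYZ : exists b, b \in Y :|: Z by exists b; rewrite in_setU Hb.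
case: (before_total DXY nXY) => bXY; case: (before_total DXZ nXZ) => bXZ;
  case: (before_total DYZ nYZ) => bYZ.
- exact: (core DXY DXZ DYZ bXY bXZ bYZ).
- exact: (core DXZ DXY DZY bXZ bXY bYZ).
- by case: (before_anti DXZ (before_trans bXY bYZ) bXZ).
- exact: (core DZX DZY DXY bXZ bYZ bXY).
- exact: (core DYX DYZ DXZ bXY bYZ bXZ).
- by case: (before_anti DYZ (before_trans bXY bXZ) bYZ).
- exact: (core DYZ DYX DZX bYZ bXY bXZ).
- exact: (core DZY DZX DYX bYZ bXZ bXY).
Qed.

End Srt.

Lemma run_split (b : bool) w : exists t rest, w = nseq t b ++ rest /\ head (~~ b) rest != b.
Proof.
elim: w => [|c w [t [rest [-> H]]]]; first by exists 0, [::]; case: b.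
case: (eqVneq c b) => [->|Hc]; first by exists t.+1, rest.
by exists 0, (c :: nseq t b ++ rest).
Qed.

Lemma nseq_shift (T : Type) (x : T) n s : nseq n.+1 x ++ s = nseq n x ++ x :: s.
Proof. by elim: n => //= n ->. Qed.

Lemma cnt_nseq (b c : bool) t : count (pred1 c) (nseq t b) = (b == c) * t.
Proof. by rewrite count_nseq /= eq_sym. Qed.

Lemma collect_of w : count id w = count negb w -> nobad w -> collectable w.
Proof.
move: w; move=> w; have [n] := ubnP (size w); elim: n w => // n IHn [|b w'] Hs; first by exists [::].
move=> Hbal Hnb.
have IH : forall w, size w < (size w').+1 -> count id w = count negb w -> nobad w -> collectable w.
  by move=> w Hw; apply: IHn; apply: leq_trans Hw _; rewrite -ltnS.
have [t [rest [Ew Hr]]] := run_split b (b :: w').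
have Ht : 0 < t.
  by case: t Ew Hr => // /= <- /=; rewrite eqxx.
have [k [rest2 [Er Hr2]]] := run_split (~~ b) rest.
rewrite negbK in Hr2.
have Hcnt : forall c s, count (pred1 c) s = if c then count id s else count negb s.
  by move=> [] s; apply: eq_count => [[]].
case: (leqP t k) => Htk.
-
  set rest' := nseq (k - t) (~~ b) ++ rest2.
  have Ew2 : b :: w' = block t b ++ rest'.
    by rewrite Ew Er /rest' /block -catA; congr (_ ++ _); rewrite catA -nseqD subnKC.
  have Hsz : size rest' < (size w').+1.
    have : size (b :: w') = size (block t b ++ rest') by rewrite Ew2.
    rewrite /= size_cat /block size_cat !size_nseq => ->.
    move: Ht; clear; lia.
  have Hbal' : count id rest' = count negb rest'.
    move: Hbal; rewrite Ew2 /block !count_cat !count_nseq.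
    case: (b) => /=; lia.
  have Hnb' : nobad rest'.
    move=> c w1 w2 Hrest. have := Hnb c (block t b ++ w1) w2.
    rewrite Ew2 Hrest catA => /(_ erefl).
    rewrite /block !count_cat !cnt_nseq.
    case: (b); case: (c) => /=; lia.
  have [bs [Hbs Ebs]] := IH rest' Hsz Hbal' Hnb'.
  exists ((t, b) :: bs); split; first by rewrite /= Ht.
  by rewrite Ew2 Ebs.
-
  case: rest2 Er Hr2 => [|c rest3] Er Hr2.
  + move: Hbal; rewrite Ew Er cats0.
    move: Htk; case: (b) => /=; rewrite !count_cat !count_nseq /=; lia.
  + have Hc : c = b by move: Hr2 => /=; case: (b); case: (c).
    subst c.
    case: k Er Htk => [|k'] Er Htk.
      by move: Hr; rewrite Er /= eqxx.
    have := Hnb b (nseq t b ++ nseq k' (~~ b)) rest3.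
    rewrite Ew Er -catA nseq_shift /= => /(_ erefl).
    rewrite !count_cat !cnt_nseq eqxx.
    move: Htk; case: (b) => /=; lia.
Qed.

Definition pairs6 : seq (nat * nat) :=
  [seq p <- [seq (i, j) | i <- iota 0 6, j <- iota 0 6] | p.1 < p.2].
Definition triples6 : seq (nat * nat * nat) :=
  [seq t <- [seq (p, k) | p <- [seq (i, j) | i <- iota 0 6, j <- iota 0 6], k <- iota 0 6] | (t.1.1 < t.1.2) && (t.1.2 < t.2)].
Definition chk (f : nat -> nat -> bool) : bool :=
  has (fun t : nat * nat * nat => let: (i, j, k) := t in
        (f i j == f j k) && (f i j == f i k)) triples6.
Definition f_of (l : seq bool) (i j : nat) : bool := nth false l (index (i, j) pairs6).

Fixpoint all_lists (n : nat) : seq (seq bool) :=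
  if n is n'.+1 then [seq b :: l | b <- [:: true; false], l <- all_lists n'] else [:: [::]].

Lemma all_lists_mem n l : size l = n -> l \in all_lists n.
Proof.
elim: n l => [|n IH] [|b l] //= [Hs].
rewrite !mem_cat; case: b; apply/orP; [left|right]; rewrite ?mem_cat ?mem_map ?IH //;
by move=> x y [].
Qed.

Lemma chk_all : all (fun l => chk (f_of l)) (all_lists 15).
Proof. vm_compute. reflexivity. Qed.

Lemma triples_ok : all (fun t : nat * nat * nat => let: (i, j, k) := t in
   [&& (i, j) \in pairs6, (j, k) \in pairs6, (i, k) \in pairs6, i < j, j < k & k < 6]) triples6.
Proof. vm_compute. reflexivity. Qed.

Lemma chk_any f : chk f.
Proof.
set l := [seq f p.1 p.2 | p <- pairs6].
have Hl : l \in all_lists 15 by apply: all_lists_mem; rewrite size_map.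
have := allP chk_all _ Hl.
have E : forall i j, (i, j) \in pairs6 -> f_of l i j = f i j.
  by move=> i j Hp; rewrite /f_of (nth_map (0,0)) ?index_mem // nth_index.
rewrite /chk; case/(@hasP _ _ triples6) => [[[i j] k] Ht H]; apply/hasP; exists (i, j, k) => //; move: H => /=.
move: (allP triples_ok _ Ht) => /and5P [H1 H2 H3 _ _].
by rewrite -!E.
Qed.

Lemma mono6 : mono_triangle_prop 2 6.
Proof.
move=> c.
have := chk_any (fun i j => val (c (inord i) (inord j)) == 0).
rewrite /chk => /hasP [[[i j] k] Ht /= /andP [/eqP H1 /eqP H2]].
move: (allP triples_ok _ Ht) => /and5P [_ _ _ Hij /andP [Hjk Hk]].
have Hj : j < 6 by apply: ltn_trans Hk.
have Hi : i < 6 by apply: ltn_trans Hj.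
have E2 : forall x y : 'I_2, (val x == 0) = (val y == 0) -> x = y.
  by move=> [[|[|x]] Hx] [[|[|y]] Hy] //= _; apply: val_inj.
exists (inord i), (inord j), (inord k); rewrite !inordK //; split => //.
  exact: E2.
exact: E2.
Qed.

Lemma clique_lt r m P N (M : {set {set 'I_N}}) R : 2 <= r -> 2 <= m -> size P = m ->
  (forall w, w \in P -> is_pattern r w /\ ~ collectable w) ->
  ordered_matching r M -> P_clique P M ->
  mono_triangle_prop m R -> #|M| < R.
Proof.
move=> Hr Hm HsP HP [Hcard [Hdisj _]] Hcl Hmono.
rewrite ltnNge; apply/negP => HR.
case: m Hm HsP Hmono => [|m'] // _ HsP Hmono.
pose ev := fun i : 'I_#|M| => @enum_val _ (mem M) i.
have evM : forall x, ev x \in M by move=> x; exact: enum_valP.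
have evD : forall x y, x != y -> ev x != ev y.
  by move=> x y; apply: contra => /eqP /enum_val_inj ->.
have Hin : forall x y, x != y -> pattern_of (ev x) (ev y) \in P.
  by move=> x y Hxy; apply: Hcl => //; apply: evD.
pose c := fun i j : 'I_R =>
  (inord (index (pattern_of (ev (widen_ord HR i)) (ev (widen_ord HR j))) P) : 'I_m'.+1).
have [i [j [k [Hij Hjk Hc1 Hc2]]]] := Hmono c.
have Hval : forall x y : 'I_R, (x < y)%N -> val (c x y) = index (pattern_of (ev (widen_ord HR x)) (ev (widen_ord HR y))) P.
  move=> x y Hxy; rewrite /c /= inordK // -HsP index_mem; apply: Hin.
  by rewrite -val_eqE /= neq_ltn Hxy.
have Hik : (i < k)%N by apply: ltn_trans Hjk.
set I := widen_ord HR i in Hval *; set J := widen_ord HR j; set K := widen_ord HR k.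
have nIJ : I != J by rewrite -val_eqE /= neq_ltn Hij.
have nIK : I != K by rewrite -val_eqE /= neq_ltn Hik.
have nJK : J != K by rewrite -val_eqE /= neq_ltn Hjk.
have Eq : forall a b, a \in P -> b \in P -> index a P = index b P -> a = b.
  by move=> a b Ha Hb E; rewrite -(nth_index [::] Ha) -(nth_index [::] Hb) E.
have E1 : pattern_of (ev J) (ev K) = pattern_of (ev I) (ev J).
  apply: Eq; rewrite ?Hin //.
  by move: (congr1 val Hc1); rewrite !Hval.
have E2 : pattern_of (ev I) (ev K) = pattern_of (ev I) (ev J).
  apply: Eq; rewrite ?Hin //.
  by move: (congr1 val Hc2); rewrite !Hval.
have [[Hc1' [Hc2' _]] Hnc] := HP _ (Hin _ _ nIJ).
apply: Hnc; apply: collect_of; first by rewrite Hc1' Hc2'.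
have ne : forall x, exists a, a \in ev x.
  move=> x; apply/set0Pn; rewrite -card_gt0 Hcard ?evM //; lia.
apply: (core_sym (Z := ev K)) => //; try (apply: Hdisj; rewrite ?evM ?evD //).
by rewrite Hc1' Hc2'.
Qed.

Theorem mainTheorem11 (r m : nat) (P : seq (seq bool)) :
  2 <= r -> 2 <= m -> uniq P -> size P = m ->
  (forall w, w \in P -> is_pattern r w /\ ~ collectable w) ->
  forall (N : nat) (M : {set {set 'I_N}}),
    ordered_matching r M -> P_clique P M ->
    (forall R, is_Ramsey3 m R -> #|M| < R) /\ (m = 2 -> #|M| <= 5).
Proof.
move=> Hr Hm _ HsP HP N M Hom Hcl; split.
  by move=> R [HR _]; apply: (clique_lt Hr Hm HsP HP Hom Hcl HR).
by move=> Em; rewrite -ltnS; apply: (clique_lt Hr Hm HsP HP Hom Hcl); rewrite Em; exact: mono6.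
Qed.
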